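(* Let $R$ be a ring with identity and let $a \in R$ satisfy $a^2 = 1$. If $a = e + q$ where $e \in R$ is an idempotent ($e^2 = e$) and $q \in R$ is nilpotent, then $e = 1$. In particular, every involution of $R$ that is the sum of an idempotent and a nilpotent is of the form $1 + q$ for some nilpotent $q \in R$.
   Context: Rings are associative with identity (not necessarily commutative). *)

(* Defs.v *)
From mathcomp Require Import all_boot all_algebra.
Set Implicit Arguments. Unset Strict Implicit. Unset Printing Implicit Defensive.
Import GRing.Theory.
Local Open Scope ring_scope.

Definition nilpotent_el (R : pzRingType) (q : R) : Prop := exists n : nat, q ^+ n = 0.

Definition idempotent_el (R : pzRingType) (e : R) : Prop := e * e = e.

(* Main.v *)
Require Import Defs.
From mathcomp Require Import all_boot all_algebra.
Import GRing.Theory.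
Local Open Scope ring_scope.

Lemma lin_aux (V : zmodType) (A B C D E F : V) :
  A + E + F = 0 -> E + B + D = 0 -> A - B + (F - C) + (C - D) = 0.
Proof.
move=> h1 h2.
have hA : A + F = - E by apply/eqP; rewrite -subr_eq0 opprK -h1 addrAC.
have hB : B + D = - E by apply/eqP; rewrite -subr_eq0 opprK -h2 addrC addrA.
rewrite -addrA (addrA (F - C)) subrK.
rewrite addrACA -opprD hA hB subrr //.
Qed.

Lemma geom_aux (R : pzRingType) (y : R) (n : nat) :
  (1 - y) * \sum_(i < n) y ^+ i = 1 - y ^+ n.
Proof.
elim: n => [|n IH]; first by rewrite big_ord0 mulr0 expr0 subrr.
rewrite big_ord_recr /= mulrDr IH mulrBl mul1r -exprS.
by rewrite addrA subrK.
Qed.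

Theorem proposition1 (R : pzRingType) (a e q : R) :
  a ^+ 2 = 1 -> idempotent_el e -> nilpotent_el q -> a = e + q ->
  e = 1 /\ exists q' : R, nilpotent_el q' /\ a = 1 + q'.
Proof.
move=> H He [N HN] Ha; subst a; rewrite /idempotent_el in He.
have h1 : e + e*q + q*e + q*q = 1.
  by rewrite -H expr2 mulrDl !mulrDr He !addrA.
have hL : e*q + e*q*e + e*q*q = 0.
  have : e * (e + e*q + q*e + q*q) = e by rewrite h1 mulr1.
  rewrite !mulrDr !mulrA He -!addrA -[RHS]addr0 => /addrI.
  by rewrite !addrA.
have hR : e*q*e + q*e + q*q*e = 0.
  have : (e + e*q + q*e + q*q) * e = e by rewrite h1 mul1r.
  rewrite !mulrDl He -(mulrA q e e) He -!addrA -[RHS]addr0 => /addrI.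
  by rewrite !addrA.
set r := e*q - q*e.
have hr : r * (1 + q) = - (q * r).
  apply/eqP; rewrite -subr_eq0 opprK /r mulrDr mulr1 !mulrBl !mulrBr !mulrA.
  by apply/eqP; exact: lin_aux hL hR.
set w := \sum_(i < N) (- q) ^+ i.
have hw : (1 + q) * w = 1.
  by rewrite -{1}(opprK q) geom_aux exprNn HN mulr0 subr0.
have hr' : r = (- q) * r * w by rewrite -[LHS]mulr1 -hw mulrA hr !mulNr.
have hind : forall m, r = (- q) ^+ m * r * w ^+ m.
  elim=> [|m IH]; first by rewrite !expr0 mul1r mulr1.
  by rewrite {1}IH {1}hr' exprSr exprS !mulrA.
have hr0 : r = 0 by rewrite (hind N) exprNn HN mulr0 mul0r mul0r.
have hc : e * q = q * e by apply: subr0_eq.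
set f := 1 - e.
have hf : f = q * (e + e + q).
  apply/eqP; rewrite /f subr_eq -h1 !mulrDr hc.
  by apply/eqP; rewrite -!addrA addrC !addrA.
have hff : forall n, f ^+ n.+1 = f.
  elim=> [|n IH]; first by rewrite expr1.
  rewrite exprS IH /f mulrBl mul1r mulrBr mulr1 He subrr subr0 //.
have hcomm : GRing.comm q (e + e + q).
  by rewrite /GRing.comm !mulrDr !mulrDl hc.
have hf0 : f = 0.
  by rewrite -(hff N) hf (exprMn_comm _ hcomm) exprSr HN mul0r mul0r.
have he : e = 1 by apply/esym/subr0_eq.
split=> //; exists q; split; [by exists N | by rewrite he].
Qed.
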